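(* Let $L$ be a matroid on a finite set $S\cup T$ with $S\cap T=\emptyset$. Then $L = L|S\mathbin{\Box} L/S$ (where $L|S$ is the restriction of $L$ to $S$ and $L/S$ is the contraction of $S$, a matroid on $T$) if and only if $S$ is a free separator of $L$.
   Context: For a matroid $M$ on a finite set $S$ write $\rho_M$ for its rank function, $\rho(M)=\rho_M(S)$, $\nu_M(A)=|A|-\rho_M(A)$ and $\lambda_M(A)=\rho(M)-\rho_M(A)$. For matroids $M$ on $S$ and $N$ on $T$ with $S\cap T=\emptyset$, the free product $M\mathbin{\Box} N$ is the matroid on $S\cup T$ whose independent sets are those $A\subseteq S\cup T$ such that $A\cap S$ is independent in $M$ and $\lambda_M(A\cap S)\geq \nu_N(A\cap T)$. A cyclic flat of a matroid is a flat that is a union of circuits. A subset $A$ of the ground set of a matroid $M$ is a free separator of $M$ if every cyclic flat of $M$ is comparable to $A$ by inclusion. *)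

(* Defs.v *)
From mathcomp Require Import all_boot.
Set Implicit Arguments. Unset Strict Implicit. Unset Printing Implicit Defensive.

(* A matroid on the finite ground set G : {set E} (E a finType) is given by
   its rank function r, of which only the values on subsets of G matter. *)
Definition is_matroid (E : finType) (G : {set E}) (r : {set E} -> nat) : Prop :=
  [/\ forall A : {set E}, A \subset G -> r A <= #|A|,
      forall A B : {set E}, A \subset B -> B \subset G -> r A <= r B &
      forall A B : {set E}, A \subset G -> B \subset G ->
        r (A :|: B) + r (A :&: B) <= r A + r B].

Section Matroids.
Variable E : finType.
Implicit Types (G S T A B C F : {set E}) (r : {set E} -> nat).

Definition indep r A : bool := r A == #|A|.

Definition nu r A : nat := #|A| - r A.
Definition lambda G r A : nat := r G - r A.

(* restriction L|S: same rank function, ground set S.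
   contraction L/S: rank A |-> r (A u S) - r S, ground set G \ S. *)
Definition restr_rank r (S : {set E}) : {set E} -> nat := r.
Definition contr_rank r S : {set E} -> nat := fun A => r (A :|: S) - r S.

Definition freeprod_indep SM rM SN rN A : bool :=
  [&& A \subset SM :|: SN, indep rM (A :&: SM) &
      nu rN (A :&: SN) <= lambda SM rM (A :&: SM)].

Definition eq_freeprod G r SM rM SN rN : Prop :=
  G = SM :|: SN /\ forall A : {set E}, A \subset G -> indep r A = freeprod_indep SM rM SN rN A.

Definition circuit G r C : Prop :=
  [/\ C \subset G, ~~ indep r C & forall D : {set E}, D \proper C -> indep r D].

Definition flat G r F : Prop :=
  F \subset G /\ forall x : E, x \in G -> x \notin F -> r F < r (x |: F).

Definition cyclic G r F : Prop :=
  F \subset G /\ forall x : E, x \in F -> exists C : {set E}, [/\ circuit G r C, x \in C & C \subset F].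

Definition cyclic_flat G r F : Prop := flat G r F /\ cyclic G r F.

Definition free_separator G r A : Prop :=
  A \subset G /\
  forall F : {set E}, cyclic_flat G r F -> F \subset A \/ A \subset F.

End Matroids.

(* Main.v *)
Require Import Defs.
From mathcomp Require Import all_boot.
From mathcomp Require Import zify.
Set Implicit Arguments. Unset Strict Implicit.

Lemma r0 (E : finType) (G : {set E}) r : is_matroid G r -> r set0 = 0.
Proof. case=> h1 _ _; have := h1 set0 (sub0set G); rewrite cards0; lia. Qed.

Lemma rmono (E : finType) (G : {set E}) r (A B : {set E}) :
  is_matroid G r -> A \subset B -> B \subset G -> r A <= r B.
Proof. by case=> _ h _; apply: h. Qed.

Lemma rsubm (E : finType) (G : {set E}) r (A B : {set E}) :
  is_matroid G r -> A \subset G -> B \subset G ->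
  r (A :|: B) + r (A :&: B) <= r A + r B.
Proof. by case=> _ _ h; apply: h. Qed.

Lemma rcard (E : finType) (G : {set E}) r (A : {set E}) :
  is_matroid G r -> A \subset G -> r A <= #|A|.
Proof. by case=> h _ _; apply: h. Qed.

Lemma indep_sub (E : finType) (G : {set E}) r (A B : {set E}) :
  is_matroid G r -> B \subset G -> A \subset B -> indep r B -> indep r A.
Proof.
move=> hM sBG sAB /eqP iB; apply/eqP.
have sAG := subset_trans sAB sBG.
have sDG : B :\: A \subset G by apply: subset_trans (subsetDl _ _) sBG.
have := rsubm hM sAG sDG.
have -> : A :|: B :\: A = B by apply/setP=> x; rewrite !inE; have:= subsetP sAB x; case: (x \in A); case: (x \in B) => // /(_ isT).
have -> : A :&: (B :\: A) = set0 by apply/setP=> x; rewrite !inE; case: (x \in A); rewrite ?andbF.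
rewrite (r0 hM) iB.
have := cardsID A B; rewrite (setIidPr sAB).
have := rcard hM sAG; have := rcard hM sDG; lia.
Qed.

Lemma rU1 (E : finType) (G : {set E}) r x (A : {set E}) :
  is_matroid G r -> x \in G -> A \subset G -> r (x |: A) <= (r A).+1.
Proof.
move=> hM xG sAG; have sxG : [set x] \subset G by rewrite sub1set.
have := rsubm hM sxG sAG; have := rcard hM sxG; rewrite cards1; lia.
Qed.

Lemma span_all (E : finType) (G : {set E}) r (X Y : {set E}) :
  is_matroid G r -> X \subset G -> Y \subset G ->
  (forall y, y \in Y -> r (y |: X) = r X) -> r (X :|: Y) = r X.
Proof.
move=> hM sXG.
have: forall n (Y : {set E}), #|Y| = n -> Y \subset G ->
  (forall y, y \in Y -> r (y |: X) = r X) -> r (X :|: Y) = r X; last first.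
  by move=> h sYG hY; apply: (h _ Y erefl).
elim=> [|n IH] {}Y cY sYG hY.
  by move/eqP: cY; rewrite cards_eq0 => /eqP ->; rewrite setU0.
have : Y != set0 by rewrite -card_gt0 cY.
case/set0Pn=> y yY.
have cY' : #|Y :\ y| = n by move: cY; rewrite (cardsD1 y) yY; case.
have sY'G : Y :\ y \subset G by apply: subset_trans (subsetDl _ _) sYG.
have IH' := IH _ cY' sY'G (fun z hz => hY z (subsetP (subsetDl _ _) z hz)).
have yG : y \in G by apply: (subsetP sYG).
have sAG : X :|: Y :\ y \subset G by rewrite subUset sXG.
have sBG : y |: X \subset G by rewrite subUset sub1set yG.
have := rsubm hM sAG sBG.
have -> : (X :|: Y :\ y) :|: (y |: X) = X :|: Y.
  apply/setP=> z; rewrite !inE; case: (eqVneq z y) => [->|]; rewrite ?yY ?orbT //=.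
  by move=> _; case: (z \in X); case: (z \in Y).
have hI : r X <= r ((X :|: Y :\ y) :&: (y |: X)).
  apply: rmono hM _ (subset_trans (subsetIl _ _) sAG).
  by rewrite subsetI subsetUl subsetUr.
have hU : r X <= r (X :|: Y) by apply: rmono hM (subsetUl _ _) _; rewrite subUset sXG.
rewrite IH' hY //; lia.
Qed.

Definition cl (E : finType) (G : {set E}) (r : {set E} -> nat) (X : {set E}) :=
  [set x in G | r (x |: X) == r X].

Lemma cl_rank (E : finType) (G : {set E}) r (X : {set E}) :
  is_matroid G r -> X \subset G -> r (cl G r X) = r X.
Proof.
move=> hM sXG.
have sclG : cl G r X \subset G by apply/subsetP=> x; rewrite inE => /andP[].
have e : X :|: cl G r X = cl G r X.
  apply/setUidPr/subsetP=> x xX; rewrite inE (subsetP sXG) //=.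
  by rewrite (setUidPr _) // sub1set.
rewrite -e; apply: (span_all hM) => // y; rewrite inE => /andP[_ /eqP] //.
Qed.

Lemma cl_flat (E : finType) (G : {set E}) r (X : {set E}) :
  is_matroid G r -> X \subset G -> flat G r (cl G r X).
Proof.
move=> hM sXG.
have sclG : cl G r X \subset G by apply/subsetP=> x; rewrite inE => /andP[].
have sXcl : X \subset cl G r X.
  apply/subsetP=> x xX; rewrite inE (subsetP sXG) //=.
  by rewrite (setUidPr _) // sub1set.
split=> // x xG xn; rewrite cl_rank //.
rewrite ltnNge; apply/negP=> hle; move: xn; rewrite inE xG /=.
have hx : r (x |: X) <= r (x |: cl G r X).
  apply: rmono hM _ _; first by apply: setUS.
  by rewrite subUset sub1set xG.
have := rmono hM (subsetUr [set x] X) (_ : x |: X \subset G).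
move=> h; rewrite eqn_leq h ?andbT; last by rewrite subUset sub1set xG.
lia.
Qed.

Lemma circ_exists (E : finType) (G : {set E}) r (A : {set E}) :
  is_matroid G r -> A \subset G -> ~~ indep r A ->
  exists C : {set E}, C \subset A /\ circuit G r C.
Proof.
move=> hM sAG dA.
case: (@minset_exists _ [pred D : {set E} | ~~ indep r D] A dA) => C mC sCA.
exists C; split=> //; split; first by apply: subset_trans sCA sAG.
  by have := minsetp mC.
move=> D pD; apply/negPn/negP => dD.
have := minsetinf mC dD (proper_sub pD) => eD.
by move: pD; rewrite eD properE subxx.
Qed.

Lemma circ_through (E : finType) (G : {set E}) r (X : {set E}) x :
  is_matroid G r -> X \subset G -> ~~ indep r X -> indep r (X :\ x) ->
  exists C : {set E}, [/\ circuit G r C, x \in C & C \subset X].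
Proof.
move=> hM sXG dX iX.
case: (circ_exists hM sXG dX) => C [sCX cC]; exists C; split=> //.
apply/negPn/negP=> xC; case: cC => _ dC _; move/negP: dC; apply.
apply: (indep_sub hM _ _ iX); first by apply: subset_trans (subsetDl _ _) sXG.
apply/subsetP=> z zC; rewrite !inE (subsetP sCX) // andbT.
by apply/eqP=> ez; move: xC; rewrite -ez zC.
Qed.

Lemma basis_ext (E : finType) (G : {set E}) r (X Y : {set E}) :
  is_matroid G r -> X \subset Y -> Y \subset G -> indep r X ->
  exists B : {set E}, [/\ X \subset B, B \subset Y, indep r B & r B = r Y].
Proof.
move=> hM sXY sYG iX.
have PX : [pred D : {set E} | (D \subset Y) && indep r D] X by rewrite /= sXY iX.
case: (maxset_exists PX) => B mB sXB.
have /andP[sBY iB] := maxsetp mB.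
have sBG := subset_trans sBY sYG.
exists B; split=> //; apply/eqP; rewrite eqn_leq (rmono hM sBY sYG) /=.
rewrite -(span_all hM sBG sYG); first by rewrite (setUidPr sBY).
move=> y yY; case yB: (y \in B); first by rewrite (setUidPr _) // sub1set.
have yG := subsetP sYG y yY.
have syBG : y |: B \subset G by rewrite subUset sub1set yG.
have h1 := rU1 hM yG sBG.
have h2 := rmono hM (subsetUr [set y] B) syBG.
have h3 : ~~ indep r (y |: B).
  apply/negP=> iyB.
  have := maxsetsup mB (_ : [pred D : {set E} | (D \subset Y) && indep r D] (y |: B)) (subsetUr _ _).
  move=> /(_ _) e; have : y \in y |: B by rewrite setU11.
  by rewrite e ?yB //= subUset sub1set yY sBY.
move: h3 iB; rewrite /indep cardsU1 yB => /eqP h3 /eqP h4.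
apply/eqP; rewrite eqn_leq h2 andbT; lia.
Qed.

Lemma cl_circ_cyclic (E : finType) (G : {set E}) r (C : {set E}) :
  is_matroid G r -> circuit G r C -> cyclic G r (cl G r C).
Proof.
move=> hM cC; case: (cC) => sCG dC mC.
have sclG : cl G r C \subset G by apply/subsetP=> x; rewrite inE => /andP[].
have sCcl : C \subset cl G r C.
  apply/subsetP=> x xC; rewrite inE (subsetP sCG) //=.
  by rewrite (setUidPr _) // sub1set.
split=> // y; rewrite inE => /andP[yG /eqP ry].
case yC: (y \in C); first by exists C.
have : C != set0.
  by apply/negP=> /eqP e; move: dC; rewrite e /indep (r0 hM) cards0.
case/set0Pn=> c cinC.
have cy : c != y by apply/eqP=> e; move: yC; rewrite -e cinC.
set X := (y |: C) :\ c.
have syCG : y |: C \subset G by rewrite subUset sub1set yG sCG.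
have sXyC : X \subset y |: C by apply: subsetDl.
have sXG : X \subset G by apply: subset_trans sXyC syCG.
have eXy : X :\ y = C :\ c.
  apply/setP=> z; rewrite !inE; case: (eqVneq z y) => [->|] /=; first by rewrite yC andbF.
  by [].
have iXy : indep r (X :\ y).
  rewrite eXy; apply: mC; rewrite properD1 //.
have cX : #|X| = #|C|.
  have := cardsD1 c (y |: C); rewrite in_setU1 cinC orbT cardsU1 yC /= -/X; lia.
have dX : ~~ indep r X.
  have h1 := rmono hM sXyC syCG.
  have h2 := rcard hM sCG.
  move: dC; rewrite /indep cX => dC; apply/negP=> /eqP e.
  move/negP: dC; apply; apply/eqP; lia.
case: (circ_through hM sXG dX iXy) => D [cD yD sDX].
exists D; split=> //; apply: subset_trans sDX _; apply: subset_trans sXyC _.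
by rewrite subUset sCcl sub1set inE yG ry eqxx.
Qed.

Lemma card_split (E : finType) (S T A : {set E}) :
  [disjoint S & T] -> A \subset S :|: T -> #|A| = #|A :&: S| + #|A :&: T|.
Proof.
move=> dST sA; rewrite -(cardsID S A); congr (_ + _); apply: eq_card => x.
rewrite !inE andbC; case xA: (x \in A) => //=.
have := subsetP sA x xA; rewrite inE; case xS: (x \in S) => /=.
  by rewrite (disjointFr dST xS).
by move=> ->.
Qed.

Lemma ar_goal x y z w : z <= y -> w <= z -> x + w <= y -> x - (y - z) <= z - w.
Proof. lia. Qed.

Lemma ar_back x y z w : y <= x + z -> z <= y -> w <= z -> x - (y - z) <= z - w -> x + w <= y.
Proof. lia. Qed.

Theorem theorem6p3 (E : finType) (S T : {set E}) (r : {set E} -> nat) :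
  is_matroid (S :|: T) r ->
  [disjoint S & T] ->
  eq_freeprod (S :|: T) r S (restr_rank r S) T (contr_rank r S)
  <-> free_separator (S :|: T) r S.
Proof.
move=> hM dST.
have sSG : S \subset S :|: T by apply: subsetUl.
have sTG : T \subset S :|: T by apply: subsetUr.
split.
- case=> _ h; split=> // F [flatF cF].
  case sFS: (F \subset S); first by left.
  case sSF: (S \subset F); first by right.
  exfalso.
  case/subsetPn: sFS => f fF fS.
  case/subsetPn: sSF => s sS sF.
  case: (flatF) => sFG flF.
  have fG := subsetP sFG f fF.
  have fT : f \in T by move: fG; rewrite inE (negbTE fS).
  case: cF => _ /(_ f fF) [C [cC fC sCF]].
  case: (cC) => sCG dC mC.
  have iCf : indep r (C :\ f) by apply: mC; rewrite properD1.
  have sCfF : C :\ f \subset F by apply: subset_trans (subsetDl _ _) sCF.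
  case: (basis_ext hM sCfF sFG iCf) => B [sCfB sBF iB rB].
  have fB : f \notin B.
    apply/negP=> fB; move/negP: dC; apply; apply: (indep_sub hM _ _ iB).
      by apply: subset_trans sBF sFG.
    apply/subsetP=> z zC; case: (eqVneq z f) => [->//|nz].
    by apply: (subsetP sCfB); rewrite !inE nz.
  set I := f |: B.
  have sIF : I \subset F by rewrite subUset sub1set fF sBF.
  have sIG : I \subset S :|: T := subset_trans sIF sFG.
  have := h I sIG.
  have -> : indep r I = false.
    apply/negbTE/negP=> /eqP e.
    have hIF := rmono hM sIF sFG; move: (iB) => /eqP iB'.
    have cI : #|I| = #|B|.+1 by rewrite /I cardsU1 fB.
    clear -hIF iB' cI e rB; lia.
  move/esym/negbT/negP; apply.
  rewrite /freeprod_indep sIG /=.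
  have sISB : I :&: S \subset B.
    apply/subsetP=> z; rewrite !inE => /andP[/orP[/eqP->|//]].
    by rewrite (negbTE fS).
  have sBG : B \subset S :|: T := subset_trans sBF sFG.
  have iIS := indep_sub hM sBG sISB iB.
  rewrite iIS /nu /lambda /contr_rank /restr_rank /=.
  move: (iIS) => /eqP rIS.
  have cI := card_split dST sIG.
  have sITSG : I :&: T :|: S \subset S :|: T by rewrite subUset sSG andbT; apply: subset_trans (subsetIl _ _) sIG.
  have h1 := rmono hM (subsetUr (I :&: T) S) sITSG.
  have h2 := rmono hM (subsetIr I S) sSG.
  have sBS : B :|: S \subset I :&: T :|: S.
    rewrite subUset subsetUr andbT; apply/subsetP=> z zB.
    rewrite !inE; case zS: (z \in S); rewrite ?orbT //.
    have := subsetP sBG z zB; rewrite inE zS /= => ->.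
    by rewrite zB orbT.
  have h3 := rmono hM sBS sITSG.
  have sBSG : B :|: S \subset S :|: T by rewrite subUset sBG sSG.
  have h4 := rsubm hM sBSG sFG.
  have h5 : r B <= r ((B :|: S) :&: F).
    apply: rmono hM _ (subset_trans (subsetIr _ _) sFG).
    by rewrite subsetI subsetUl sBF.
  have ssF : s |: F \subset B :|: S :|: F.
    by rewrite subUset sub1set !inE sS orbT /= subsetUr.
  have sBSFG : B :|: S :|: F \subset S :|: T by rewrite subUset sBSG sFG.
  have h6 := rmono hM ssF sBSFG.
  have h7 := flF s (subsetP sSG s sS) sF.
  have cI' : #|I| = #|B|.+1 by rewrite /I cardsU1 fB.
  move: iB => /eqP iB.
  apply: ar_goal => //.
  rewrite rIS addnC -cI cI'.
  clear -h3 h4 h5 h6 h7 iB rB; lia.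
- case=> _ fs; split=> // A sAG; apply/idP/idP.
  + move=> iA; rewrite /freeprod_indep sAG /=.
    have iAS := indep_sub hM sAG (subsetIl A S) iA.
    rewrite iAS /nu /lambda /contr_rank /restr_rank /=.
    move: iAS iA => /eqP rAS /eqP rA.
    have cA := card_split dST sAG.
    have sATSG : A :&: T :|: S \subset S :|: T by rewrite subUset sSG andbT; apply: subset_trans (subsetIl _ _) sAG.
    have h1 := rmono hM (subsetUr (A :&: T) S) sATSG.
    have h2 := rmono hM (subsetIr A S) sSG.
    have sA : A \subset A :&: T :|: S.
      apply/subsetP=> z zA; rewrite !inE zA /=.
      by have := subsetP sAG z zA; rewrite inE orbC.
    have h3 := rmono hM sA sATSG.
    apply: ar_goal => //.
    by rewrite rAS addnC -cA -rA.
  + rewrite /freeprod_indep sAG /= => /andP[iAS].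
    rewrite /nu /lambda /contr_rank /restr_rank /=.
    move: (iAS) => /eqP rAS.
    have cA := card_split dST sAG.
    have sATG : A :&: T \subset S :|: T by apply: subset_trans (subsetIl _ _) sAG.
    have h1 := rsubm hM sATG sSG.
    have h1' := rcard hM sATG.
    have sATSG : A :&: T :|: S \subset S :|: T by rewrite subUset sSG sATG.
    have h2 := rmono hM (subsetUr (A :&: T) S) sATSG.
    have h2' := rmono hM (subsetIr A S) sSG.
    move=> hnu.
    have key : #|A| <= r (A :&: T :|: S).
      rewrite cA -rAS addnC; apply: (ar_back _ h2 h2' hnu).
      clear -h1 h1'; lia.
    apply/negPn/negP => dA.
    case: (circ_exists hM sAG dA) => C [sCA cC].
    have : ~~ (C \subset S).
      apply/negP=> sCS; case: (cC) => _ /negP dC _; apply: dC.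
      apply: (indep_sub hM (subset_trans (subsetIl _ _) sAG) _ iAS).
      by rewrite subsetI sCA sCS.
    case/subsetPn=> x xC xS.
    case: (cC) => sCG _ _.
    have sclG : cl (S :|: T) r C \subset S :|: T by apply/subsetP=> z; rewrite inE => /andP[].
    have sCcl : C \subset cl (S :|: T) r C.
      apply/subsetP=> z zC; rewrite inE (subsetP sCG) //=.
      by rewrite (setUidPr _) // sub1set.
    case: (fs _ (conj (cl_flat hM sCG) (cl_circ_cyclic hM cC))) => [sclS|sScl].
      by move: xS; rewrite (subsetP sclS) // (subsetP sCcl).
    have sCSG : C :|: S \subset S :|: T by rewrite subUset sCG sSG.
    have h3 : r (C :|: S) <= r C.
      rewrite -(cl_rank hM sCG); apply: rmono hM _ sclG.
      by rewrite subUset sCcl sScl.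
    have h4 := rsubm hM sAG sCSG.
    have h5 : r C <= r (A :&: (C :|: S)).
      apply: rmono hM _ (subset_trans (subsetIl _ _) sAG).
      by rewrite subsetI sCA subsetUl.
    have sAU : A :&: T :|: S \subset A :|: (C :|: S).
      rewrite subUset; apply/andP; split.
        exact: subset_trans (subsetIl A T) (subsetUl _ _).
      exact: subset_trans (subsetUr C S) (subsetUr _ _).
    have sUG : A :|: (C :|: S) \subset S :|: T by rewrite subUset sAG sCSG.
    have h6 := rmono hM sAU sUG.
    have h7 := rcard hM sAG.
    have h8 : r A != #|A| by [].
    move/eqP: h8 => h8.
    clear -h3 h4 h5 h6 h7 h8 key; lia.
Qed.
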